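(* Let $R=R_{K\times L,(x_0,y_0)}$ be a rectangle and let $f:\Omega\to\mathbb{R}$ be an $R$-local function. Then $\mu^{\mathrm{per}}_{\Lambda,\lambda}(f\cdot\tau f)\ge0$ in each of the two cases: (a) $\Lambda=R_{2K\times L}$ and $\tau$ is the reflection of $\mathbb{R}^2$ through the vertical line $x=x_0+K$; (b) $\Lambda=R_{K\times2L}$ and $\tau$ is the reflection through the horizontal line $y=y_0+L$. Here $(\tau f)(\sigma)=f(\sigma\circ\tau)$, with $\tau$ restricted to $\mathbb{Z}^2$.
   Context: Tiles: $T_{(x,y)}=[x-1,x+1]\times[y-1,y+1]$; $\Omega=\{\sigma\in\{0,1\}^{\mathbb{Z}^2}: \sigma(u)=\sigma(v)=1,u\ne v\Rightarrow\mathrm{int}(T_u)\cap\mathrm{int}(T_v)=\emptyset\}$. A rectangle is a closed axis-parallel rectangle with integer corners; $R_{K\times L,(x,y)}=[x,x+K]\times[y,y+L]$, $R_{K\times L}=R_{K\times L,(0,0)}$. A face is a unit square with integer corners, vacant in $\sigma$ if contained in no tile of $\sigma$. For a rectangle $\Lambda$ and $\lambda>0$: $w_{\Lambda,\lambda}(\sigma)=\lambda^{-\frac14\#\{\text{vacant faces }\subset\Lambda\}}$; $\Omega^{\mathrm{per}}_\Lambda$ is the set of $\sigma\in\Omega$ periodic with periods $(\mathrm{Width}(\Lambda),0)$ and $(0,\mathrm{Height}(\Lambda))$; $\mu^{\mathrm{per}}_{\Lambda,\lambda}(\sigma)=w_{\Lambda,\lambda}(\sigma)/\sum_{\sigma'\in\Omega^{\mathrm{per}}_\Lambda}w_{\Lambda,\lambda}(\sigma')$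 on $\Omega^{\mathrm{per}}_\Lambda$. A function $f$ on $\Omega$ is $R$-local if $f(\sigma)$ depends only on $\sigma$ restricted to $R\cap\mathbb{Z}^2$ ($R$ closed). *)

(* Defs.v *)
From HB Require Import structures.
From mathcomp Require Import all_boot all_order all_algebra.
From mathcomp Require Import boolp reals exp.
Set Implicit Arguments. Unset Strict Implicit. Unset Printing Implicit Defensive.
Import Order.TTheory GRing.Theory Num.Theory.
Local Open Scope ring_scope.

(* A configuration sigma in {0,1}^{Z^2}: sigma z = true means a tile sits at z. *)
Definition config := int * int -> bool.

(* int(T_u) /\ int(T_v) = empty, where T_(x,y) = [x-1,x+1] x [y-1,y+1]:
   the open squares (x-1,x+1)x(y-1,y+1) are disjoint iff the open intervals
   are disjoint in one of the coordinates, i.e. |dx| >= 2 or |dy| >= 2. *)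
Definition tiles_int_disjoint (u v : int * int) : bool :=
  (2 <= `|u.1 - v.1|) || (2 <= `|u.2 - v.2|).

Definition in_Omega (sigma : config) : Prop :=
  forall u v, sigma u -> sigma v -> u <> v -> tiles_int_disjoint u v.

(* The face [a,a+1]x[b,b+1] (indexed by its lower-left corner (a,b)) is
   contained in the tile T_(x,y). *)
Definition face_in_tile (a : int * int) (u : int * int) : bool :=
  [&& u.1 - 1 <= a.1, a.1 + 1 <= u.1 + 1, u.2 - 1 <= a.2 & a.2 + 1 <= u.2 + 1].

Definition vacant (sigma : config) (a : int * int) : Prop :=
  ~ (exists u, sigma u /\ face_in_tile a u).

(* Number of vacant faces contained in Lambda = [0,W] x [0,H]. *)
Definition n_vacant (W H : nat) (sigma : config) : nat :=
  #|[set p : 'I_W * 'I_H | `[< vacant sigma ((nat_of_ord p.1)%:Z, (nat_of_ord p.2)%:Z) >]]|.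

Definition weight {R : realType} (W H : nat) (lam : R) (sigma : config) : R :=
  lam `^ (- (4%:R)^-1 * (n_vacant W H sigma)%:R).

(* Periodic configurations with periods (W,0), (0,H) (W, H > 0) are in
   bijection with their restriction to [0,W) x [0,H); [per_ext s] is the
   periodic configuration with restriction s. *)
Definition per_ext (W H : nat) (s : {ffun 'I_W * 'I_H -> bool}) : config :=
  fun z => [exists p : 'I_W * 'I_H,
    [&& s p, (nat_of_ord p.1)%:Z == (z.1 %% W%:Z)%Z
           & (nat_of_ord p.2)%:Z == (z.2 %% H%:Z)%Z]].

Definition in_Omega_per (W H : nat) (s : {ffun 'I_W * 'I_H -> bool}) : bool :=
  `[< in_Omega (per_ext s) >].

Definition mu_per {R : realType} (W H : nat) (lam : R) (g : config -> R) : R :=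
  (\sum_(s : {ffun 'I_W * 'I_H -> bool} | in_Omega_per s)
      weight W H lam (per_ext s) * g (per_ext s))
  / (\sum_(s : {ffun 'I_W * 'I_H -> bool} | in_Omega_per s)
      weight W H lam (per_ext s)).

Definition R_local {R : realType} (K L : nat) (x0 y0 : int) (f : config -> R) : Prop :=
  forall sigma sigma' : config, in_Omega sigma -> in_Omega sigma' ->
    (forall z : int * int, x0 <= z.1 <= x0 + K%:Z -> y0 <= z.2 <= y0 + L%:Z ->
        sigma z = sigma' z) ->
    f sigma = f sigma'.

Definition refl_vert (c : int) (z : int * int) : int * int := (2 * c - z.1, z.2).
Definition refl_horiz (c : int) (z : int * int) : int * int := (z.1, 2 * c - z.2).

Definition refl_fun {R : realType} (tau : int * int -> int * int) (f : config -> R)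
  : config -> R := fun sigma => f (fun z => sigma (tau z)).

(* Main.v *)
Require Import Defs.
From HB Require Import structures.
From mathcomp Require Import all_boot all_order all_algebra.
From mathcomp Require Import boolp reals exp.
From mathcomp Require Import zify ring lra.
Import Order.TTheory GRing.Theory Num.Theory.
Local Open Scope ring_scope.


Lemma modz_fix (d : int) (a r k : int) : 0 <= r < d -> a = k * d + r -> (a %% d)%Z = r.
Proof. move=> hr ->; rewrite modzMDl modz_small //. Qed.

Lemma modz_bnd (W : nat) (a : int) : (0 < W)%N -> 0 <= (a %% W%:Z)%Z < W%:Z.
Proof.
move=> W0; rewrite modz_ge0 ?ltz_pmod //; lia.
Qed.

Definition offx (K : nat) (x0 x : int) : int := ((x - x0) %% (K.*2)%:Z)%Z.
Definition inL K x0 x : bool := offx K x0 x <= K%:Z.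
Definition onB K x0 x : bool := (offx K x0 x == 0) || (offx K x0 x == K%:Z).

Lemma offx_bnd K x0 x : (0 < K)%N -> 0 <= offx K x0 x < (K.*2)%:Z.
Proof. move=> K0; apply: modz_bnd; lia. Qed.

Lemma offx_eq K x0 x : exists q : int, x - x0 = q * (K.*2)%:Z + offx K x0 x.
Proof. exists ((x - x0) %/ (K.*2)%:Z)%Z; exact: divz_eq. Qed.

Lemma offx_succ K x0 x : (0 < K)%N ->
  offx K x0 (x + 1) = if offx K x0 x + 1 == (K.*2)%:Z then 0 else offx K x0 x + 1.
Proof.
move=> K0; have [q hq] := offx_eq K x0 x; have hb := offx_bnd K x0 x K0.
move: hq hb; rewrite /offx => hq hb.
case: eqP => e.
- apply: (@modz_fix _ _ _ (q + 1)); first by lia.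
  rewrite mulrDl mul1r -e; lia.
- apply: (@modz_fix _ _ _ q); first by lia.
  lia.
Qed.

Lemma offx_refl K x0 x : (0 < K)%N ->
  offx K x0 (2 * (x0 + K%:Z) - x) =
  if offx K x0 x == 0 then 0 else (K.*2)%:Z - offx K x0 x.
Proof.
move=> K0; have [q hq] := offx_eq K x0 x; have hb := offx_bnd K x0 x K0.
move: hq hb; rewrite /offx => hq hb.
case: eqP => e.
- apply: (@modz_fix _ _ _ (1 - q)); first by lia.
  rewrite mulrBl mul1r; move: hq; rewrite e addr0 => hq.
  have -> : 2 * (x0 + K%:Z) - x - x0 = (K.*2)%:Z - (x - x0) by lia.
  lia.
- apply: (@modz_fix _ _ _ (- q)); first by lia.
  have -> : 2 * (x0 + K%:Z) - x - x0 = (K.*2)%:Z - (x - x0) by lia.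
  lia.
Qed.

Lemma offx_small K x0 x : (0 < K)%N -> x0 <= x <= x0 + K%:Z -> offx K x0 x = x - x0.
Proof. move=> K0 h; rewrite /offx modz_small //; lia. Qed.

Lemma offx_mod K x0 x : offx K x0 ((x %% (K.*2)%:Z)%Z) = offx K x0 x.
Proof. by rewrite /offx modzDml. Qed.

Lemma offx_modeq K x0 x y : offx K x0 x = offx K x0 y ->
  (x %% (K.*2)%:Z)%Z = (y %% (K.*2)%:Z)%Z.
Proof.
rewrite /offx => e.
have -> : x = (x - x0) + x0 by ring.
have -> : y = (y - x0) + x0 by ring.
by rewrite -modzDml e modzDml.
Qed.


Definition per (W H : nat) (sig : config) : Prop :=
  forall a b, sig (a, b) = sig ((a %% W%:Z)%Z, (b %% H%:Z)%Z).

Lemma per_eq W H sig a b a' b' : per W H sig ->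
  (a %% W%:Z)%Z = (a' %% W%:Z)%Z -> (b %% H%:Z)%Z = (b' %% H%:Z)%Z ->
  sig (a, b) = sig (a', b').
Proof. by move=> P e1 e2; rewrite P e1 e2 -P. Qed.

Lemma per_ext_per W H s : per W H (@per_ext W H s).
Proof. by move=> a b; rewrite /per_ext /= !modz_mod. Qed.

Definition res (W H : nat) (sig : config) : {ffun 'I_W * 'I_H -> bool} :=
  [ffun p => sig ((nat_of_ord p.1)%:Z, (nat_of_ord p.2)%:Z)].

Lemma res_per_ext W H s : res W H (per_ext s) = s.
Proof.
apply/ffunP => p; rewrite ffunE /per_ext /=.
have h1 : ((nat_of_ord p.1)%:Z %% W%:Z)%Z = (nat_of_ord p.1)%:Z.
  by rewrite modz_small //; have := ltn_ord p.1; lia.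
have h2 : ((nat_of_ord p.2)%:Z %% H%:Z)%Z = (nat_of_ord p.2)%:Z.
  by rewrite modz_small //; have := ltn_ord p.2; lia.
rewrite h1 h2; apply/existsP/idP.
- case=> q /and3P [sq /eqP e1 /eqP e2].
  have -> : p = q; last by [].
  case: p q sq e1 e2 {h1 h2} => [i j] [i' j'] /= _ e1 e2.
  by congr pair; apply: val_inj => /=; lia.
- by move=> sp; exists p; rewrite sp !eqxx.
Qed.

Lemma per_ext_res W H sig z : (0 < W)%N -> (0 < H)%N -> per W H sig ->
  per_ext (res W H sig) z = sig z.
Proof.
move=> W0 H0 P; case: z => a b.
have ha := modz_bnd W a W0; have hb := modz_bnd H b H0.
have hi : (`|(a %% W%:Z)%Z| < W)%N by lia.
have hj : (`|(b %% H%:Z)%Z| < H)%N by lia.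
rewrite /per_ext P; apply/existsP/idP.
- case=> q /and3P [sq /eqP e1 /eqP e2]; move: sq; rewrite ffunE /=.
  by rewrite e1 e2.
- move=> sab; exists (Ordinal hi, Ordinal hj); rewrite ffunE /=.
  have -> : (`|(a %% W%:Z)%Z|%N)%:Z = (a %% W%:Z)%Z by lia.
  have -> : (`|(b %% H%:Z)%Z|%N)%:Z = (b %% H%:Z)%Z by lia.
  by rewrite sab !eqxx.
Qed.

Lemma per_ext_inj W H (p q : {ffun 'I_W * 'I_H -> bool}) :
  (forall z, per_ext p z = per_ext q z) -> p = q.
Proof.
move=> e; rewrite -(res_per_ext W H p) -(res_per_ext W H q).
by apply/ffunP => x; rewrite !ffunE e.
Qed.

Lemma res_ext W H sig sig' : (forall z, sig z = sig' z) -> res W H sig = res W H sig'.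
Proof. by move=> e; apply/ffunP => x; rewrite !ffunE e. Qed.

Lemma in_Omega_sub (sig sig' : config) : in_Omega sig -> (forall z, sig' z -> sig z) -> in_Omega sig'.
Proof. by move=> O h u v hu hv; apply: O; apply: h. Qed.

Lemma in_Omega_ext (sig sig' : config) : in_Omega sig -> (forall z, sig z = sig' z) -> in_Omega sig'.
Proof. by move=> O h; apply: (@in_Omega_sub sig sig' O) => z; rewrite h. Qed.

Definition vac (sig : config) (z : int * int) : bool :=
  ~~ [|| sig z, sig (z.1 + 1, z.2), sig (z.1, z.2 + 1) | sig (z.1 + 1, z.2 + 1)].

Lemma vacantE sig z : vacant sig z <-> vac sig z.
Proof.
case: z => a b; rewrite /vacant /vac /face_in_tile /=; split.
- move=> h; apply/negP => /or4P H; apply: h.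
  case: H => H; [exists (a, b) | exists (a + 1, b) | exists (a, b + 1) | exists (a + 1, b + 1)];
   split => //=; apply/and4P; split; lia.
- move=> /norP [h1 /norP [h2 /norP [h3 h4]]] [[u1 u2] [su /and4P [e1 e2 e3 e4]]] /=.
  move: e1 e2 e3 e4 => /= e1 e2 e3 e4.
  have E1 : u1 = a \/ u1 = a + 1 by lia.
  have E2 : u2 = b \/ u2 = b + 1 by lia.
  by case: E1 => ?; case: E2 => ?; subst u1 u2; rewrite su in h1 h2 h3 h4.
Qed.

Lemma n_vacantE W H sig :
  n_vacant W H sig = (\sum_(i < W) \sum_(j < H) vac sig ((nat_of_ord i)%:Z, (nat_of_ord j)%:Z))%N.
Proof.
rewrite /n_vacant -sum1_card pair_big /= big_mkcond /=.
apply: eq_bigr => [[i j]] _; rewrite !inE /=.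
case: asboolP => h; case: (boolP (vac _ _)) => h' //.
- by move/vacantE: h; rewrite (negbTE h').
- by case: h; apply/vacantE.
Qed.

Lemma vac_ext (sig sig' : config) z : (forall z, sig z = sig' z) -> vac sig z = vac sig' z.
Proof. by move=> e; rewrite /vac !e. Qed.


Definition Lc K x0 (sig : config) : config := fun z => sig z && inL K x0 z.1.
Definition Tc K x0 (sig : config) : config := fun z => sig (refl_vert (x0 + K%:Z) z).
Definition Gc K x0 (s1 s2 : config) : config :=
  fun z => if inL K x0 z.1 then s1 z else s2 (refl_vert (x0 + K%:Z) z).

Lemma refl_vertK c z : refl_vert c (refl_vert c z) = z.
Proof. by case: z => a b; rewrite /refl_vert /=; congr pair; ring. Qed.

Lemma inL_mod K x0 x : inL K x0 ((x %% (K.*2)%:Z)%Z) = inL K x0 x.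
Proof. by rewrite /inL offx_mod. Qed.

Lemma onB_mod K x0 x : onB K x0 ((x %% (K.*2)%:Z)%Z) = onB K x0 x.
Proof. by rewrite /onB offx_mod. Qed.

Lemma not_inL_refl K x0 x : (0 < K)%N -> ~~ inL K x0 x -> inL K x0 (2 * (x0 + K%:Z) - x).
Proof.
move=> K0; rewrite /inL offx_refl //; have := offx_bnd K x0 x K0.
case: eqP => e; lia.
Qed.

Lemma inL_refl_onB K x0 x : (0 < K)%N ->
  inL K x0 x && inL K x0 (2 * (x0 + K%:Z) - x) = onB K x0 x.
Proof.
move=> K0; rewrite /inL /onB offx_refl //; have := offx_bnd K x0 x K0.
case: eqP => e; lia.
Qed.

Lemma onB_inL K x0 x : onB K x0 x -> inL K x0 x.
Proof. rewrite /onB /inL => /orP [] /eqP ->; lia. Qed.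

Lemma onB_refl_mod K x0 x : (0 < K)%N -> onB K x0 x ->
  ((2 * (x0 + K%:Z) - x) %% (K.*2)%:Z)%Z = (x %% (K.*2)%:Z)%Z.
Proof.
move=> K0 hB; apply: (@offx_modeq K x0); rewrite offx_refl //.
move: hB; rewrite /onB; case: eqP => e //= /eqP ->; lia.
Qed.

Lemma inL_R K x0 x : (0 < K)%N -> x0 <= x <= x0 + K%:Z -> inL K x0 x.
Proof. by move=> K0 h; rewrite /inL offx_small //; lia. Qed.

Lemma inL_adj K x0 a b : (0 < K)%N -> `|a - b| < 2 ->
  (inL K x0 a && inL K x0 b) ||
  (inL K x0 (2 * (x0 + K%:Z) - a) && inL K x0 (2 * (x0 + K%:Z) - b)).
Proof.
move=> K0 hab.
have key : forall a, (inL K x0 a && inL K x0 (a + 1)) ||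
  (inL K x0 (2 * (x0 + K%:Z) - a) && inL K x0 (2 * (x0 + K%:Z) - (a + 1))).
  move=> y; rewrite /inL !offx_refl // offx_succ //.
  have := offx_bnd K x0 y K0.
  case: eqP => e1; case: eqP => e2; try case: eqP => e3; lia.
have [E|[E|E]] : b = a \/ b = a + 1 \/ a = b + 1 by lia.
- subst b; rewrite !andbb; case: (boolP (inL K x0 a)) => //= h.
  exact: not_inL_refl.
- by subst b.
- by subst a; rewrite andbC [X in _ || X]andbC.
Qed.

Lemma refl_mod K x0 a :
  ((2 * (x0 + K%:Z) - (a %% (K.*2)%:Z)%Z) %% (K.*2)%:Z)%Z =
  ((2 * (x0 + K%:Z) - a) %% (K.*2)%:Z)%Z.
Proof. by rewrite -modzDmr modzNm modzDmr. Qed.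

Lemma per_andQ W H (Q : int -> bool) sig : (forall a, Q ((a %% W%:Z)%Z) = Q a) ->
  per W H sig -> per W H (fun z => sig z && Q z.1).
Proof. by move=> hQ P a b /=; rewrite hQ P. Qed.

Lemma per_Lc K H x0 sig : per (K.*2) H sig -> per (K.*2) H (Lc K x0 sig).
Proof. by apply: per_andQ => a; rewrite inL_mod. Qed.

Lemma per_Tc K H x0 sig : per (K.*2) H sig -> per (K.*2) H (Tc K x0 sig).
Proof.
move=> P a b; rewrite /Tc /refl_vert /=; apply: per_eq => //.
  by rewrite refl_mod.
by rewrite modz_mod.
Qed.

Lemma per_Gc K H x0 s1 s2 : per (K.*2) H s1 -> per (K.*2) H s2 ->
  per (K.*2) H (Gc K x0 s1 s2).
Proof.
move=> P1 P2 a b; rewrite /Gc /= inL_mod; case: ifP => _; first by rewrite P1.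
by have := @per_Tc K H x0 s2 P2 a b; rewrite /Tc.
Qed.


Lemma tiles_refl c u v :
  tiles_int_disjoint (refl_vert c u) (refl_vert c v) = tiles_int_disjoint u v.
Proof. rewrite /tiles_int_disjoint /refl_vert /=; lia. Qed.

Lemma Omega_T K x0 sig : in_Omega sig -> in_Omega (Tc K x0 sig).
Proof.
move=> O u v su sv neq; rewrite -(tiles_refl (x0 + K%:Z)); apply: O => // e.
by apply: neq; rewrite -(refl_vertK (x0 + K%:Z) u) e refl_vertK.
Qed.

Lemma Omega_glue K x0 sig : (0 < K)%N ->
  in_Omega (Lc K x0 sig) -> in_Omega (Lc K x0 (Tc K x0 sig)) -> in_Omega sig.
Proof.
move=> K0 OL OT u v su sv neq.
apply/negPn/negP => nd.
have hab : `|u.1 - v.1| < 2 by move: nd; rewrite /tiles_int_disjoint; lia.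
case/orP: (inL_adj K x0 _ _ K0 hab) => /andP [h1 h2].
- have : tiles_int_disjoint u v.
    by apply: (OL u v) => //; rewrite /Lc ?su ?sv ?h1 ?h2.
  by rewrite (negbTE nd).
- have : tiles_int_disjoint u v.
    rewrite -(tiles_refl (x0 + K%:Z)); apply: (OT (refl_vert (x0 + K%:Z) u) (refl_vert (x0 + K%:Z) v)).
    + by rewrite /Lc /Tc refl_vertK su /=.
    + by rewrite /Lc /Tc refl_vertK sv /=.
    + by move=> e; apply: neq; rewrite -(refl_vertK (x0 + K%:Z) u) e refl_vertK.
  by rewrite (negbTE nd).
Qed.

Lemma absmod_lt W (x : int) : (0 < W)%N -> (`|(x %% W%:Z)%Z| < W)%N.
Proof. move=> W0; have := modz_bnd W x W0; lia. Qed.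

Definition hsh W (x0 : int) (t : 'I_W) : 'I_W :=
  Ordinal (@absmod_lt W (x0 + (nat_of_ord t)%:Z) (leq_ltn_trans (leq0n t) (ltn_ord t))).

Lemma hshE W x0 (t : 'I_W) : (nat_of_ord (hsh W x0 t))%:Z = ((x0 + (nat_of_ord t)%:Z) %% W%:Z)%Z.
Proof.
rewrite /hsh /=; have W0 : (0 < W)%N by apply: leq_ltn_trans (leq0n t) (ltn_ord t).
have := modz_bnd W (x0 + (nat_of_ord t)%:Z) W0; lia.
Qed.

Lemma hsh_inj W x0 : injective (@hsh W x0).
Proof.
move=> t t' e.
have e' : ((x0 + (nat_of_ord t)%:Z) %% W%:Z)%Z = ((x0 + (nat_of_ord t')%:Z) %% W%:Z)%Z.
  by rewrite -!hshE e.
have : ((((x0 + (nat_of_ord t)%:Z) %% W%:Z)%Z - x0) %% W%:Z)%Z = ((((x0 + (nat_of_ord t')%:Z) %% W%:Z)%Z - x0) %% W%:Z)%Z by rewrite e'.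
rewrite !modzDml !modz_small; [| have := ltn_ord t'; lia | have := ltn_ord t; lia].
move=> h; apply: val_inj => /=; lia.
Qed.

Lemma sum_shift W (x0 : int) (G : int -> nat) : (forall a, G a = G ((a %% W%:Z)%Z)) ->
  (\sum_(i < W) G (nat_of_ord i)%:Z = \sum_(t < W) G (x0 + (nat_of_ord t)%:Z)%R)%N.
Proof.
move=> hG; rewrite (reindex_inj (@hsh_inj W x0)) /=.
by apply: eq_bigr => t _; rewrite hshE -hG.
Qed.

Definition vL K H x0 (sig : config) : nat :=
  (\sum_(t < K.*2 | (t < K)%N) \sum_(j < H) vac sig ((x0 + (nat_of_ord t)%:Z)%R, (nat_of_ord j)%:Z))%N.

Lemma vL_ext K H x0 (sig sig' : config) : (forall z, sig z = sig' z) -> vL K H x0 sig = vL K H x0 sig'.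
Proof. by move=> e; apply: eq_bigr => t _; apply: eq_bigr => j _; rewrite (@vac_ext sig sig' _ e). Qed.

Lemma vL_Lc K H x0 sig : (0 < K)%N -> vL K H x0 (Lc K x0 sig) = vL K H x0 sig.
Proof.
move=> K0; apply: eq_bigr => t tK; apply: eq_bigr => j _.
rewrite /vac /Lc /= !inL_R ?andbT //; lia.
Qed.

Lemma vac_refl K x0 sig a b :
  vac sig (a, b) = vac (Tc K x0 sig) (2 * (x0 + K%:Z) - a - 1, b).
Proof.
rewrite /vac /Tc /refl_vert /=.
have -> : 2 * (x0 + K%:Z) - (2 * (x0 + K%:Z) - a - 1) = a + 1 by ring.
have -> : 2 * (x0 + K%:Z) - (2 * (x0 + K%:Z) - a - 1 + 1) = a by ring.
by case: (sig (a, b)); case: (sig (a + 1, b)); case: (sig (a, b + 1)); case: (sig (a + 1, b + 1)).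
Qed.

Lemma vac_per W H sig a b : per W H sig -> vac sig (a, b) = vac sig ((a %% W%:Z)%Z, b).
Proof.
move=> P; rewrite /vac /=.
have e : (((a %% W%:Z)%Z + 1) %% W%:Z)%Z = ((a + 1) %% W%:Z)%Z by rewrite modzDml.
rewrite (@per_eq W H sig a b ((a %% W%:Z)%Z) b) ?modz_mod //.
rewrite (@per_eq W H sig (a + 1) b ((a %% W%:Z)%Z + 1) b) ?e //.
rewrite (@per_eq W H sig a (b + 1) ((a %% W%:Z)%Z) (b + 1)) ?modz_mod //.
by rewrite (@per_eq W H sig (a + 1) (b + 1) ((a %% W%:Z)%Z + 1) (b + 1)) ?e.
Qed.

Lemma n_vacant_split K H x0 sig : (0 < K)%N -> per (K.*2) H sig ->
  n_vacant (K.*2) H sig = (vL K H x0 sig + vL K H x0 (Tc K x0 sig))%N.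
Proof.
move=> K0 P; rewrite n_vacantE.
rewrite (@sum_shift (K.*2) x0 (fun a => \sum_(j < H) vac sig (a, (nat_of_ord j)%:Z))%N); last first.
  by move=> a; apply: eq_bigr => j _; rewrite (@vac_per (K.*2) H sig _ _ P).
rewrite (bigID (fun t : 'I_(K.*2) => (t < K)%N)) /=; congr addn.
rewrite (reindex_inj rev_ord_inj) /=.
apply: eq_big => t.
  by rewrite /= subnSK //; lia.
move=> tK; apply: eq_bigr => j _.
rewrite (@vac_refl K x0); congr vac; congr pair.
  by rewrite /=; have := ltn_ord t; lia.
Qed.


Lemma gen_rp (R : realDomainType) (S P B : finType) (lp rp : S -> P) (glue : P -> P -> S)
  (E : P -> bool) (bd : P -> B) (a : P -> R) :
  (forall s, glue (lp s) (rp s) = s) ->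
  (forall p q, (lp (glue p q) == p) && (rp (glue p q) == q) = [&& E p, E q & bd p == bd q]) ->
  0 <= \sum_s a (lp s) * a (rp s).
Proof.
move=> hg hc.
have step1 : \sum_s a (lp s) * a (rp s) =
   \sum_p \sum_q \sum_s (if (lp s == p) && (rp s == q) then a p * a q else 0).
  symmetry; under eq_bigr => p _ do rewrite exchange_big /=.
  rewrite exchange_big /=; apply: eq_bigr => s _.
  rewrite exchange_big /=.
  rewrite (bigD1 (rp s)) //= [X in _ + X]big1 ?addr0; last first.
    by move=> q nq; apply: big1 => p _; rewrite [rp s == q]eq_sym (negbTE nq) andbF.
  rewrite (bigD1 (lp s)) //= [X in _ + X]big1 ?addr0; last first.
    by move=> p np; rewrite [lp s == p]eq_sym (negbTE np).
  by rewrite !eqxx.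
have step2 : forall p q, \sum_s (if (lp s == p) && (rp s == q) then a p * a q else 0)
   = if [&& E p, E q & bd p == bd q] then a p * a q else 0.
  move=> p q; rewrite -hc.
  case: (boolP ((lp (glue p q) == p) && (rp (glue p q) == q))) => h.
  - rewrite (bigD1 (glue p q)) //= h big1 ?addr0 // => s ns.
    case: ifP => // /andP [/eqP e1 /eqP e2].
    by move: ns; rewrite -(hg s) e1 e2 eqxx.
  - apply: big1 => s _; case: ifP => // /andP [/eqP e1 /eqP e2].
    by move: h; rewrite -e1 -e2 hg !eqxx.
have step3 : \sum_s a (lp s) * a (rp s) =
   \sum_(b : B) (\sum_p (if E p && (bd p == b) then a p else 0)) *
                (\sum_q (if E q && (bd q == b) then a q else 0)).
  rewrite step1 (eq_bigr _ (fun p _ => eq_bigr _ (fun q _ => step2 p q))).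
  under [RHS]eq_bigr => b _ do rewrite big_distrlr /=.
  symmetry; rewrite exchange_big /=; apply: eq_bigr => p _.
  rewrite exchange_big /=; apply: eq_bigr => q _.
  case: (boolP (E p)) => Ep; case: (boolP (E q)) => Eq /=;
    try (by rewrite big1 // => b _; rewrite ?mul0r ?mulr0).
  rewrite (bigD1 (bd p)) //= eqxx big1 ?addr0.
    by rewrite eq_sym; case: eqP => e; rewrite ?mulr0.
  by move=> b nb; rewrite eq_sym (negbTE nb) mul0r.
rewrite step3; apply: sumr_ge0 => b _; rewrite -expr2; exact: sqr_ge0.
Qed.


Definition FF K H := {ffun 'I_(K.*2) * 'I_H -> bool}.

Definition lpF K H (x0 : int) (s : FF K H) : FF K H := res (K.*2) H (Lc K x0 (per_ext s)).
Definition thF K H (x0 : int) (s : FF K H) : FF K H := res (K.*2) H (Tc K x0 (per_ext s)).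
Definition rpF K H (x0 : int) (s : FF K H) : FF K H := lpF K H x0 (thF K H x0 s).
Definition glF K H (x0 : int) (p q : FF K H) : FF K H := res (K.*2) H (Gc K x0 (per_ext p) (per_ext q)).
Definition bdF K H (x0 : int) (p : FF K H) : FF K H := res (K.*2) H (fun z => per_ext p z && onB K x0 z.1).

Arguments lpF {K H}.
Arguments thF {K H}.
Arguments rpF {K H}.
Arguments glF {K H}.
Arguments bdF {K H}.

Lemma K2pos K : (0 < K)%N -> (0 < K.*2)%N.
Proof. lia. Qed.

Lemma pe_lp K H x0 (s : FF K H) z : (0 < K)%N -> (0 < H)%N ->
  per_ext (lpF x0 s) z = Lc K x0 (per_ext s) z.
Proof. move=> K0 H0; rewrite per_ext_res ?K2pos //; apply: per_Lc; exact: per_ext_per. Qed.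

Lemma pe_th K H x0 (s : FF K H) z : (0 < K)%N -> (0 < H)%N ->
  per_ext (thF x0 s) z = Tc K x0 (per_ext s) z.
Proof. move=> K0 H0; rewrite per_ext_res ?K2pos //; apply: per_Tc; exact: per_ext_per. Qed.

Lemma pe_rp K H x0 (s : FF K H) z : (0 < K)%N -> (0 < H)%N ->
  per_ext (rpF x0 s) z = Lc K x0 (Tc K x0 (per_ext s)) z.
Proof. by move=> K0 H0; rewrite /rpF pe_lp // /Lc pe_th. Qed.

Lemma pe_gl K H x0 (p q : FF K H) z : (0 < K)%N -> (0 < H)%N ->
  per_ext (glF x0 p q) z = Gc K x0 (per_ext p) (per_ext q) z.
Proof. move=> K0 H0; rewrite per_ext_res ?K2pos //; apply: per_Gc; exact: per_ext_per. Qed.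

Lemma pe_bd K H x0 (p : FF K H) z : (0 < K)%N -> (0 < H)%N ->
  per_ext (bdF x0 p) z = per_ext p z && onB K x0 z.1.
Proof.
move=> K0 H0; rewrite per_ext_res ?K2pos //; apply: per_andQ; last exact: per_ext_per.
by move=> a; rewrite onB_mod.
Qed.

Lemma pe_reflB K H x0 (p : FF K H) z : (0 < K)%N -> onB K x0 z.1 ->
  per_ext p (refl_vert (x0 + K%:Z) z) = per_ext p z.
Proof.
move=> K0 hB; case: z hB => a b hB; rewrite /refl_vert /=.
by apply: per_eq; [exact: per_ext_per | exact: onB_refl_mod | ].
Qed.

Lemma glF_split K H x0 (s : FF K H) : (0 < K)%N -> (0 < H)%N ->
  glF x0 (lpF x0 s) (rpF x0 s) = s.
Proof.
move=> K0 H0; apply: per_ext_inj => z; rewrite pe_gl // /Gc.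
case: ifP => hz; first by rewrite pe_lp // /Lc hz andbT.
rewrite pe_rp // /Lc /Tc refl_vertK.
have -> : inL K x0 (refl_vert (x0 + K%:Z) z).1 by apply: not_inL_refl => //; rewrite hz.
by rewrite andbT.
Qed.

Lemma lpF_glF K H x0 (p q : FF K H) : (0 < K)%N -> (0 < H)%N ->
  lpF x0 (glF x0 p q) = lpF x0 p.
Proof.
move=> K0 H0; apply: per_ext_inj => z; rewrite !pe_lp // /Lc pe_gl // /Gc.
by case: ifP; rewrite ?andbF ?andbT.
Qed.

Lemma compatF K H x0 (p q : FF K H) : (0 < K)%N -> (0 < H)%N ->
  (lpF x0 (glF x0 p q) == p) && (rpF x0 (glF x0 p q) == q) =
  [&& lpF x0 p == p, lpF x0 q == q & bdF x0 p == bdF x0 q].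
Proof.
move=> K0 H0; rewrite lpF_glF //; congr andb.
have V : forall z, per_ext (rpF x0 (glF x0 p q)) z =
   (if inL K x0 (refl_vert (x0 + K%:Z) z).1 then per_ext p (refl_vert (x0 + K%:Z) z)
    else per_ext q z) && inL K x0 z.1.
  by move=> z; rewrite pe_rp // /Lc /Tc pe_gl // /Gc refl_vertK.
apply/eqP/andP.
- move=> e; have V' := V; rewrite e in V'.
  split; apply/eqP.
  + apply: per_ext_inj => z; rewrite pe_lp // /Lc.
    case: (boolP (inL K x0 z.1)) => hz; first by rewrite andbT.
    by rewrite andbF [RHS]V' (negbTE hz) andbF.
  + apply: res_ext => z; case: (boolP (onB K x0 z.1)) => hB; rewrite ?andbF ?andbT //.
    rewrite [RHS]V'; move: (hB); rewrite -(inL_refl_onB K x0 _ K0) => /andP [h1 h2].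
    by rewrite /= h2 h1 andbT pe_reflB.
- case=> /eqP eq1 /eqP eq2; apply: per_ext_inj => z; rewrite V.
  case: (boolP (inL K x0 z.1)) => hz; rewrite ?andbF ?andbT.
  + case: ifP => h2.
    * have hB : onB K x0 z.1 by rewrite -(inL_refl_onB K x0 _ K0) hz.
      rewrite pe_reflB //.
      have := congr1 (fun r => per_ext r z) eq2; rewrite /= !pe_bd // hB !andbT.
      by [].
    * by [].
  + by rewrite -eq1 pe_lp // /Lc (negbTE hz) andbF.
Qed.


Definition wL (R : realType) K H (x0 : int) (lam : R) (sig : config) : R :=
  lam `^ (- (4%:R)^-1 * (vL K H x0 sig)%:R).

Arguments wL {R}.

Definition aF (R : realType) K H (x0 : int) (lam : R) (f : config -> R) (p : FF K H) : R :=
  (if in_Omega_per p then wL K H x0 lam (per_ext p) else 0) * f (per_ext p).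

Arguments aF {R K}.

Lemma term_id (R : realType) K L x0 y0 (lam : R) f (s : FF K L) :
  (0 < K)%N -> (0 < L)%N -> 0 < lam -> R_local K L x0 y0 f ->
  (if in_Omega_per s then weight (K.*2) L lam (per_ext s) *
      (f (per_ext s) * refl_fun (refl_vert (x0 + K%:Z)) f (per_ext s)) else 0)
  = aF L x0 lam f (lpF x0 s) * aF L x0 lam f (rpF x0 s).
Proof.
move=> K0 L0 lam0 Rl.
set sig := per_ext s.
have Psig : per (K.*2) L sig by exact: per_ext_per.
rewrite /aF /in_Omega_per.
case: (asboolP (in_Omega sig)) => O.
- have OL : in_Omega (per_ext (lpF x0 s)).
    apply: (@in_Omega_ext (Lc K x0 sig)); last by move=> z; rewrite pe_lp.
    by apply: (@in_Omega_sub sig _ O) => z /andP [].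
  have OR : in_Omega (per_ext (rpF x0 s)).
    apply: (@in_Omega_ext (Lc K x0 (Tc K x0 sig))); last by move=> z; rewrite pe_rp.
    by apply: (@in_Omega_sub _ _ (Omega_T K x0 sig O)) => z /andP [].
  rewrite (asboolT OL) (asboolT OR).
  have fL : f sig = f (per_ext (lpF x0 s)).
    apply: Rl => // z /andP [h1 h2] _; rewrite pe_lp // /Lc inL_R ?andbT //.
    by apply/andP.
  have fR : refl_fun (refl_vert (x0 + K%:Z)) f sig = f (per_ext (rpF x0 s)).
    rewrite /refl_fun; apply: Rl => //; first exact: (Omega_T K x0 sig O).
    move=> z /andP [h1 h2] _; rewrite pe_rp // /Lc inL_R ?andbT //.
    by apply/andP.
  have vl : vL K L x0 (per_ext (lpF x0 s)) = vL K L x0 sig.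
    by rewrite -(vL_Lc K L x0 sig K0); apply: vL_ext => z; rewrite pe_lp.
  have vr : vL K L x0 (per_ext (rpF x0 s)) = vL K L x0 (Tc K x0 sig).
    by rewrite -(vL_Lc K L x0 (Tc K x0 sig) K0); apply: vL_ext => z; rewrite pe_rp.
  rewrite /weight /wL vl vr (n_vacant_split K L x0 sig K0 Psig) natrD mulrDr powRD; last first.
    by rewrite (gt_eqF lam0) implybT.
  rewrite fL fR; ring.
- have : ~ (in_Omega (per_ext (lpF x0 s)) /\ in_Omega (per_ext (rpF x0 s))).
    case=> OL OR; apply: O; apply: (Omega_glue K x0 sig K0).
    + by apply: (@in_Omega_ext _ _ OL) => z; rewrite pe_lp.
    + by apply: (@in_Omega_ext _ _ OR) => z; rewrite pe_rp.
  case: (asboolP (in_Omega (per_ext (lpF x0 s)))) => OL;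
  case: (asboolP (in_Omega (per_ext (rpF x0 s)))) => OR; rewrite ?mul0r ?mulr0 //.
  by case.
Qed.

Lemma caseA (R : realType) (K L : nat) (x0 y0 : int) (lam : R) (f : config -> R) :
  (0 < K)%N -> (0 < L)%N -> 0 < lam ->
  R_local K L x0 y0 f ->
  0 <= mu_per (K.*2) L lam
         (fun sigma => f sigma * refl_fun (refl_vert (x0 + K%:Z)) f sigma).
Proof.
move=> K0 L0 lam0 Rl; rewrite /mu_per; apply: divr_ge0; last first.
  by apply: sumr_ge0 => s _; exact: powR_ge0.
rewrite big_mkcond /=.
rewrite (eq_bigr (fun s => aF L x0 lam f (lpF x0 s) * aF L x0 lam f (rpF x0 s))); last first.
  by move=> s _; exact: (@term_id R K L x0 y0 lam f s K0 L0 lam0 Rl).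
apply: (@gen_rp R (FF K L) (FF K L) (FF K L) (lpF x0) (rpF x0) (glF x0)
   (fun p => lpF x0 p == p) (bdF x0)).
- by move=> s; apply: glF_split.
- by move=> p q; apply: compatF.
Qed.


Definition swp (sig : config) : config := fun z => sig (z.2, z.1).

Definition trF W H (t : {ffun 'I_H * 'I_W -> bool}) : {ffun 'I_W * 'I_H -> bool} :=
  [ffun p => t (p.2, p.1)].

Lemma trFK W H (t : {ffun 'I_H * 'I_W -> bool}) : trF H W (trF W H t) = t.
Proof. by apply/ffunP => [[i j]]; rewrite !ffunE. Qed.

Lemma per_swp W H sig : per W H sig -> per H W (swp sig).
Proof. by move=> P a b; rewrite /swp /= P. Qed.

Lemma pe_trF W H (t : {ffun 'I_H * 'I_W -> bool}) : (0 < W)%N -> (0 < H)%N ->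
  per_ext (trF W H t) = swp (per_ext t).
Proof.
move=> W0 H0.
have -> : trF W H t = res W H (swp (per_ext t)).
  apply/ffunP => p; rewrite !ffunE /swp /=.
  by have := congr1 (fun r : {ffun _ -> bool} => r (p.2, p.1)) (res_per_ext H W t); rewrite ffunE.
apply: funext => z; rewrite per_ext_res //; apply: per_swp; exact: per_ext_per.
Qed.

Lemma Omega_swp sig : in_Omega sig -> in_Omega (swp sig).
Proof.
move=> O u v su sv neq.
have : tiles_int_disjoint (u.2, u.1) (v.2, v.1).
  apply: O => // e; apply: neq; case: u v e {su sv} => [a b] [c d] /= [-> ->] //.
by rewrite /tiles_int_disjoint /= orbC.
Qed.

Lemma swpK sig : swp (swp sig) = sig.
Proof. by apply: funext => [[a b]]. Qed.

Lemma n_vacant_swp W H sig : n_vacant W H (swp sig) = n_vacant H W sig.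
Proof.
rewrite !n_vacantE exchange_big /=; apply: eq_bigr => j _; apply: eq_bigr => i _.
rewrite /vac /swp /=.
by case: (sig (_, _)); case: (sig (_, _)); case: (sig (_, _)); case: (sig (_, _)).
Qed.

Lemma mu_per_swp (R : realType) W H (lam : R) (g : config -> R) :
  (0 < W)%N -> (0 < H)%N ->
  mu_per W H lam g = mu_per H W lam (fun sig => g (swp sig)).
Proof.
move=> W0 H0; rewrite /mu_per.
have bij : {on [pred s | in_Omega_per s], bijective (trF W H)}.
  by exists (trF H W) => t _; rewrite trFK.
rewrite (reindex (trF W H) bij) [X in _ / X](reindex (trF W H) bij).
have E : forall t, in_Omega_per (trF W H t) = in_Omega_per t.
  move=> t; rewrite /in_Omega_per pe_trF //; apply/asboolP/asboolP.
  + by move/Omega_swp; rewrite swpK.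
  + exact: Omega_swp.
under eq_bigl do rewrite E.
under [X in _ / X]eq_bigl do rewrite E.
congr (_ / _); apply: eq_bigr => t _; by rewrite /weight pe_trF // n_vacant_swp.
Qed.

Theorem lemma3p1 (R : realType) (K L : nat) (x0 y0 : int) (lam : R)
    (f : config -> R) :
  (0 < K)%N -> (0 < L)%N -> 0 < lam ->
  R_local K L x0 y0 f ->
  0 <= mu_per (K.*2) L lam
         (fun sigma => f sigma * refl_fun (refl_vert (x0 + K%:Z)) f sigma)
  /\
  0 <= mu_per K (L.*2) lam
         (fun sigma => f sigma * refl_fun (refl_horiz (y0 + L%:Z)) f sigma).
Proof.
move=> K0 L0 lam0 Rl; split; first exact: caseA Rl.
have Rl' : R_local L K y0 x0 (fun sig => f (swp sig)).
  move=> s1 s2 O1 O2 h; apply: Rl; try exact: Omega_swp.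
  by move=> z h1 h2; rewrite /swp; apply: h.
rewrite mu_per_swp //; last by lia.
exact: (@caseA R L K y0 x0 lam (fun sig => f (swp sig)) L0 K0 lam0 Rl').
Qed.
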